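(* Let $w\in W_0^J$ and $\beta\in\Delta_0^+\setminus\Delta_J^+$ be such that there is an edge $\lfloor wr_\beta\rfloor\xleftarrow{\beta}w$ in the parabolic quantum Bruhat graph. Let $j\in I_0$. (1) If $\langle w\Lambda,\alpha_j^\vee\rangle>0$ and $w\beta\ne\pm\alpha_j$, then $\langle wr_\beta\Lambda,\alpha_j^\vee\rangle>0$; moreover both $r_j\lfloor wr_\beta\rfloor$ and $r_jw$ lie in $W_0^J$, and there is an edge $r_j\lfloor wr_\beta\rfloor\xleftarrow{\beta}r_jw$. (2) If $\langle wr_\beta\Lambda,\alpha_j^\vee\rangle<0$ and $w\beta\ne\pm\alpha_j$, then $\langle w\Lambda,\alpha_j^\vee\rangle<0$; moreover both $r_j\lfloor wr_\beta\rfloor$ and $r_jw$ lie in $W_0^J$, and there is an edge $r_j\lfloor wr_\beta\rfloor\xleftarrow{\beta}r_jw$. (3) If $\langle wr_\beta\Lambda,\alpha_j^\vee\rangle<0$ and $\langle w\Lambda,\alpha_j^\vee\rangle\ge0$, then $w\beta=\pm\alpha_j$. (4) If $\langle wr_\beta\Lambda,\alpha_j^\vee\rangle\le0$ and $\langle w\Lambda,\alpha_j^\vee\rangle>0$, then $w\beta=\pm\alpha_j$.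
   Context: Let $\Delta_0$ be the (finite, reduced, irreducible) root system of the finite-dimensional simple Lie algebra underlying an untwisted affine Lie algebra, with simple roots $\alpha_j$, simple coroots $\alpha_j^\vee$ ($j\in I_0$), positive roots $\Delta_0^+$, Weyl group $W_0$ generated by simple reflections $r_j$. Let $\lambda=\sum_{i\in I_0}m_i\varpi_i$ ($m_i\in\mathbb{Z}_{\ge0}$) be a level-zero dominant integral weight and $\Lambda=\mathrm{cl}(\lambda)$ its image modulo $\mathbb{C}\delta$, so $\langle\Lambda,\alpha_j^\vee\rangle=m_j$ for $j\in I_0$; $W_0$ acts on $\Lambda$. Let $J=\{j\in I_0\mid\langle\Lambda,\alpha_j^\vee\rangle=0\}$, $W_J=\langle r_j\mid j\in J\rangle$, $\Delta_J^+=\Delta_0^+\cap\bigoplus_{j\in J}\mathbb{Z}\alpha_j$, $W_0^J$ the set of minimal-length representatives of $W_0/W_J$, $\lfloor w\rfloor\in W_0^J$ the representative of $wW_J$, $\ell$ the length, $\rho=\frac12\sum_{\alpha\in\Delta_0^+}\alpha$, $\rho_J=\frac12\sum_{\alpha\in\Delta_J^+}\alpha$. The parabolic quantum Bruhat graph has vertex set $W_0^J$ and a directed edge $\lfloor wr_\beta\rfloor\xleftarrow{\beta}w$ for $w\in W_0^J$, $\beta\in\Delta_0^+\setminus\Delta_J^+$, whenever either $\ell(\lfloor wr_\beta\rfloor)=\ell(w)+1$ (Bruhat edge) or $\ell(\lfloor wr_\beta\rfloor)=\ell(w)-2\langle\rho-\rho_J,\beta^\vee\rangle+1$ (quantum edge).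 *)

(* Defs.v *)
From HB Require Import structures.
From mathcomp Require Import all_boot all_order all_algebra.
From Stdlib Require Import ClassicalEpsilon.
Set Implicit Arguments. Unset Strict Implicit. Unset Printing Implicit Defensive.
Import Order.TTheory GRing.Theory Num.Theory.
Local Open Scope ring_scope.

Section RootData.
Variable R : realFieldType.
Variable n : nat.
Local Notation V := 'cV[R]_n.

Definition pairing (x y : V) : R := (x^T *m y) ord0 ord0.
(* coroot b^v = 2 b / (b, b), so that <x, b^v> = pairing x (coroot b) *)
Definition coroot (b : V) : V := (2 / pairing b b) *: b.
(* reflection r_b : x |-> x - <x, b^v> b, as a matrix acting on the left *)
Definition refl (b : V) : 'M[R]_n := 1%:M - (2 / pairing b b) *: (b *m b^T).

Variable Phi : seq V.
Variable alpha : 'I_n -> V.    (* the simple roots, indexed by I_0 = 'I_n *)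

(* Phi is a finite, reduced, irreducible root system in V (spanning V is a
   consequence of the base axioms below) *)
Definition is_reduced_irreducible_root_system : Prop :=
  [/\ uniq Phi, 0 \notin Phi,
      (forall a b, a \in Phi -> b \in Phi -> refl a *m b \in Phi),
      (forall a b, a \in Phi -> b \in Phi ->
         exists z : int, pairing b (coroot a) = z%:~R)
    & (forall a (c : R), a \in Phi -> c *: a \in Phi -> c = 1 \/ c = -1)]
  /\ (forall P : pred V, (exists2 a, a \in Phi & P a) ->
        (exists2 b, b \in Phi & ~~ P b) ->
        exists a b, [/\ a \in Phi, b \in Phi, P a, ~~ P b & pairing a b != 0]).

Definition is_base : Prop :=
  [/\ (forall j, alpha j \in Phi),
      (forall c : 'I_n -> R, \sum_j c j *: alpha j = 0 -> forall j, c j = 0)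
    & (forall b, b \in Phi -> exists c : 'I_n -> nat,
          b = \sum_j (c j)%:R *: alpha j \/ b = - \sum_j (c j)%:R *: alpha j)].

Definition Amat : 'M[R]_n := \matrix_(i < n, j < n) alpha j i ord0.
Definition coords (x : V) : V := invmx Amat *m x.

Definition posroot (b : V) : bool :=
  (b \in Phi) && [forall j : 'I_n, 0 <= coords b j ord0].

Definition sref (j : 'I_n) : 'M[R]_n := refl (alpha j).
Definition wordmx (s : seq 'I_n) : 'M[R]_n :=
  foldr (fun j M => sref j *m M) 1%:M s.
Definition inW0 (w : 'M[R]_n) : Prop := exists s : seq 'I_n, wordmx s = w.
Definition has_word_of_size (w : 'M[R]_n) (k : nat) : bool :=
  [exists s : k.-tuple 'I_n, wordmx s == w].
Definition ell (w : 'M[R]_n) : nat :=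
  match excluded_middle_informative (exists k, has_word_of_size w k) with
  | left h => ex_minn h
  | right _ => 0%N
  end.

Variable Lam : V.

Definition inJ (j : 'I_n) : bool := pairing Lam (coroot (alpha j)) == 0.
Definition posrootJ (b : V) : bool :=
  posroot b && [forall j : 'I_n, (~~ inJ j) ==> (coords b j ord0 == 0)].
Definition inWJ (v : 'M[R]_n) : Prop :=
  exists s : seq 'I_n, all inJ s /\ wordmx s = v.
Definition inW0J (w : 'M[R]_n) : Prop :=
  inW0 w /\ forall v, inWJ v -> (ell w <= ell (w *m v))%N.
(* floor x : the (unique) element of W_0^J in x W_J *)
Definition floor (x : 'M[R]_n) : 'M[R]_n :=
  match excluded_middle_informative
          (exists u, inW0J u /\ exists v, inWJ v /\ u = x *m v) with
  | left h => proj1_sig (constructive_indefinite_description _ h)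
  | right _ => x
  end.

Definition rho : V := 2^-1 *: \sum_(a <- Phi | posroot a) a.
Definition rhoJ : V := 2^-1 *: \sum_(a <- Phi | posrootJ a) a.

(* edge  u <-(b)- w  in the parabolic quantum Bruhat graph *)
Definition qbg_edge (w : 'M[R]_n) (b : V) (u : 'M[R]_n) : Prop :=
  [/\ inW0J w, posroot b && ~~ posrootJ b, u = floor (w *m refl b)
    & (ell u = (ell w).+1 \/
       (ell u)%:R = (ell w)%:R - 2 * pairing (rho - rhoJ) (coroot b) + 1)].

End RootData.

(* Main.v *)
Require Import Defs.
From HB Require Import structures.
From mathcomp Require Import all_boot all_order all_algebra.
From mathcomp Require Import ring lra.
From Stdlib Require Import Classical ClassicalEpsilon.
Import Order.TTheory GRing.Theory Num.Theory.
Set Implicit Arguments. Unset Strict Implicit. Unset Printing Implicit Defensive.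
Local Open Scope ring_scope.

Section LinAlg.
Variable R : realFieldType.
Variable n : nat.
Local Notation V := 'cV[R]_n.

Lemma mx_ext (A B : 'M[R]_n) : (forall x : V, A *m x = B *m x) -> A = B.
Proof.
move=> H; apply/matrixP=> i j.
have := congr1 (fun M : V => M i 0) (H (delta_mx j 0)).
by rewrite -!colE !mxE.
Qed.

Lemma pairingE (x y : V) : pairing x y = \sum_i x i 0 * y i 0.
Proof. by rewrite /pairing !mxE; apply: eq_bigr => i _; rewrite mxE. Qed.

Lemma pairingC (x y : V) : pairing x y = pairing y x.
Proof. by rewrite !pairingE; apply: eq_bigr => i _; rewrite mulrC. Qed.

Lemma pairingDr (x y z : V) : pairing x (y + z) = pairing x y + pairing x z.
Proof. by rewrite !pairingE -big_split; apply: eq_bigr => i _; rewrite mxE mulrDr. Qed.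

Lemma pairingDl (x y z : V) : pairing (y + z) x = pairing y x + pairing z x.
Proof. by rewrite !(pairingC _ x) pairingDr. Qed.

Lemma pairingZr (x y : V) c : pairing x (c *: y) = c * pairing x y.
Proof. by rewrite !pairingE mulr_sumr; apply: eq_bigr => i _; rewrite mxE mulrCA. Qed.

Lemma pairingZl (x y : V) c : pairing (c *: y) x = c * pairing y x.
Proof. by rewrite !(pairingC _ x) pairingZr. Qed.

Lemma pairingNr (x y : V) : pairing x (- y) = - pairing x y.
Proof. by rewrite -scaleN1r pairingZr mulN1r. Qed.

Lemma pairingNl (x y : V) : pairing (- y) x = - pairing y x.
Proof. by rewrite !(pairingC _ x) pairingNr. Qed.

Lemma pairingBr (x y z : V) : pairing x (y - z) = pairing x y - pairing x z.
Proof. by rewrite pairingDr pairingNr. Qed.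

Lemma pairingBl (x y z : V) : pairing (y - z) x = pairing y x - pairing z x.
Proof. by rewrite pairingDl pairingNl. Qed.

Lemma pairing0r (x : V) : pairing x 0 = 0.
Proof. by rewrite pairingE big1 // => i _; rewrite mxE mulr0. Qed.

Lemma pairing_sumr (x : V) I (r : seq I) (P : pred I) (F : I -> V) :
  pairing x (\sum_(i <- r | P i) F i) = \sum_(i <- r | P i) pairing x (F i).
Proof.
elim/big_rec2: _ => [|i y1 y2 _ <-]; first by rewrite pairing0r.
by rewrite pairingDr.
Qed.

Lemma pairing_suml (x : V) I (r : seq I) (P : pred I) (F : I -> V) :
  pairing (\sum_(i <- r | P i) F i) x = \sum_(i <- r | P i) pairing (F i) x.
Proof. by rewrite pairingC pairing_sumr; apply: eq_bigr => i _; rewrite pairingC. Qed.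

Lemma pairing_mull (M : 'M[R]_n) (x y : V) : pairing (M *m x) y = pairing x (M^T *m y).
Proof. by rewrite /pairing trmx_mul mulmxA. Qed.

Lemma pairing_self_ge0 (x : V) : 0 <= pairing x x.
Proof. by rewrite pairingE sumr_ge0 // => i _; rewrite -expr2 sqr_ge0. Qed.

Lemma pairing_self_eq0 (x : V) : (pairing x x == 0) = (x == 0).
Proof.
apply/idP/eqP=> [|->]; last by rewrite pairing0r.
rewrite pairingE psumr_eq0 => [/allP H|i _]; last by rewrite -expr2 sqr_ge0.
apply/matrixP=> i j; rewrite (ord1 j) mxE.
have /H : i \in index_enum 'I_n by rewrite mem_index_enum.
by rewrite /= -expr2 sqrf_eq0 => /eqP.
Qed.

Lemma pairing_self_gt0 (x : V) : x != 0 -> 0 < pairing x x.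
Proof. by move=> nz; rewrite lt_def pairing_self_eq0 nz pairing_self_ge0. Qed.

Lemma mulmx_1x1 (b : V) (a : 'M[R]_1) : b *m a = a 0 0 *: b.
Proof.
by apply/matrixP=> i j; rewrite (ord1 j) !mxE big_ord1 mulrC.
Qed.

Lemma corootE (x b : V) : pairing x (coroot b) = 2 / pairing b b * pairing x b.
Proof. by rewrite /coroot pairingZr. Qed.

Lemma reflE (b x : V) : refl b *m x = x - pairing x (coroot b) *: b.
Proof.
rewrite /refl mulmxBl mul1mx -scalemxAl -mulmxA mulmx_1x1 scalerA.
by rewrite corootE (pairingC x).
Qed.

Lemma refl_tr (b : V) : (refl b)^T = refl b.
Proof. by rewrite /refl linearB /= trmx1 linearZ /= trmx_mul trmxK. Qed.

Lemma coroot_self (b : V) : b != 0 -> pairing b (coroot b) = 2.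
Proof.
move=> nz; rewrite corootE mulrAC -mulrA divff ?mulr1 //.
by rewrite pairing_self_eq0.
Qed.

Lemma refl_self (b : V) : b != 0 -> refl b *m b = - b.
Proof. by move=> nz; rewrite reflE coroot_self // scaler_nat mulr2n opprD addrA subrr add0r. Qed.

Lemma pairing_refl (b x y : V) : b != 0 ->
  pairing (refl b *m x) (refl b *m y) = pairing x y.
Proof.
move=> nz; rewrite !reflE pairingBl !pairingBr !pairingZl !pairingZr.
have hb : pairing b b != 0 by rewrite pairing_self_eq0.
rewrite (pairingC b y); field. by [].
Qed.

Lemma refl_invol (b : V) : b != 0 -> refl b *m refl b = 1%:M.
Proof.
move=> nz; apply: mx_ext => x; rewrite mul1mx -mulmxA.
rewrite [refl b *m (refl b *m x)]reflE.
have -> : pairing (refl b *m x) (coroot b) = - pairing x (coroot b).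
  have h := pairing_refl x b nz; rewrite refl_self // pairingNr in h.
  by rewrite /coroot !pairingZr -h mulrN opprK.
by rewrite reflE scaleNr opprK subrK.
Qed.

Definition orth (M : 'M[R]_n) := M^T *m M = 1%:M.

Lemma orthC M : orth M -> M *m M^T = 1%:M.
Proof. exact: mulmx1C. Qed.

Lemma orth_tr M : orth M -> orth M^T.
Proof. by move=> o; rewrite /orth trmxK orthC. Qed.

Lemma orth_mul M N : orth M -> orth N -> orth (M *m N).
Proof.
by move=> oM oN; rewrite /orth trmx_mul mulmxA -(mulmxA _ M^T) oM mulmx1 oN.
Qed.

Lemma orth1 : orth 1%:M.
Proof. by rewrite /orth trmx1 mulmx1. Qed.

Lemma orth_refl (b : V) : b != 0 -> orth (refl b).
Proof. by move=> nz; rewrite /orth refl_tr refl_invol. Qed.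

Lemma pairing_orth M (x y : V) : orth M -> pairing (M *m x) (M *m y) = pairing x y.
Proof. by move=> o; rewrite pairing_mull mulmxA o mul1mx. Qed.

Lemma orth_neq0 M (x : V) : orth M -> (M *m x == 0) = (x == 0).
Proof.
move=> o; apply/eqP/eqP=> [h|->]; last by rewrite mulmx0.
by rewrite -[x]mul1mx -o -mulmxA h mulmx0.
Qed.

Lemma refl_conj M (b : V) : orth M -> b != 0 -> refl (M *m b) = M *m refl b *m M^T.
Proof.
move=> o nz; apply: mx_ext => x.
rewrite reflE -!mulmxA reflE mulmxBr -scalemxAr mulmxA orthC // mul1mx.
congr (_ - _ *: _); rewrite !corootE pairing_orth //.
by rewrite -[x in pairing x (M *m b)](mul1mx) -(orthC o) -mulmxA pairing_orth.
Qed.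

Lemma refl_opp (b : V) : refl (- b) = refl b.
Proof. by rewrite /refl pairingNl pairingNr opprK linearN /= mulmxN mulNmx opprK. Qed.

End LinAlg.

Section Roots.
Variable R : realFieldType.
Variable n : nat.
Local Notation V := 'cV[R]_n.
Variable Phi : seq V.
Variable alpha : 'I_n -> V.
Variable Lam : V.
Hypothesis hPhi : is_reduced_irreducible_root_system Phi.
Hypothesis hbase : is_base Phi alpha.
Hypothesis hLam : forall j : 'I_n, exists m : nat, pairing Lam (coroot (alpha j)) = m%:R.

Local Notation posroot := (posroot Phi alpha).
Local Notation coords := (coords alpha).
Local Notation Amat := (Amat alpha).
Local Notation sref := (sref alpha).
Local Notation wordmx := (wordmx alpha).

Lemma Phi_uniq : uniq Phi. Proof. by case: hPhi => -[]. Qed.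
Lemma root_neq0 a : a \in Phi -> a != 0.
Proof. by case: hPhi => -[_ h0 _ _ _] _; apply: contraTneq => ->. Qed.
Lemma refl_Phi a b : a \in Phi -> b \in Phi -> refl a *m b \in Phi.
Proof. by case: hPhi => -[_ _ h _ _] _; apply: h. Qed.
Lemma coroot_int a b : a \in Phi -> b \in Phi -> exists z : int, pairing b (coroot a) = z%:~R.
Proof. by case: hPhi => -[_ _ _ h _] _; apply: h. Qed.
Lemma reduced a c : a \in Phi -> c *: a \in Phi -> c = 1 \/ c = -1.
Proof. by case: hPhi => -[_ _ _ _ h] _; apply: h. Qed.
Lemma opp_Phi a : a \in Phi -> - a \in Phi.
Proof. by move=> aP; rewrite -refl_self ?root_neq0 // refl_Phi. Qed.
Lemma alpha_Phi j : alpha j \in Phi. Proof. by case: hbase. Qed.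
Lemma alpha_neq0 j : alpha j != 0. Proof. exact/root_neq0/alpha_Phi. Qed.

Lemma sref_orth j : orth (sref j). Proof. exact/orth_refl/alpha_neq0. Qed.

Lemma wordmx_cat s t : wordmx (s ++ t) = wordmx s *m wordmx t.
Proof. by elim: s => [|a s IH] /=; rewrite ?mul1mx // IH mulmxA. Qed.

Lemma wordmx_orth s : orth (wordmx s).
Proof. elim: s => [|a s IH] /=; [exact: orth1 | exact: orth_mul (sref_orth a) IH]. Qed.

Lemma wordmx_rcons s a : wordmx (rcons s a) = wordmx s *m sref a.
Proof. by rewrite -cats1 wordmx_cat /= mulmx1. Qed.

Lemma wordmx_tr s : (wordmx s)^T = wordmx (rev s).
Proof.
elim: s => [|a s IH] /=; first by rewrite trmx1.
by rewrite trmx_mul IH rev_cons wordmx_rcons /sref refl_tr.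
Qed.

Lemma wordmx_Phi s a : a \in Phi -> wordmx s *m a \in Phi.
Proof.
elim: s a => [|j s IH] a aP /=; first by rewrite mul1mx.
by rewrite -mulmxA refl_Phi ?alpha_Phi ?IH.
Qed.

Lemma inW0_orth w : inW0 alpha w -> orth w.
Proof. by case=> s <-; exact: wordmx_orth. Qed.
Lemma inW0_Phi w a : inW0 alpha w -> a \in Phi -> w *m a \in Phi.
Proof. by case=> s <-; exact: wordmx_Phi. Qed.
Lemma inW0_tr w : inW0 alpha w -> inW0 alpha w^T.
Proof. by case=> s <-; exists (rev s); rewrite wordmx_tr. Qed.
Lemma inW0_mul w v : inW0 alpha w -> inW0 alpha v -> inW0 alpha (w *m v).
Proof. by case=> s <- [t <-]; exists (s ++ t); rewrite wordmx_cat. Qed.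
Lemma inW0_sref j : inW0 alpha (sref j).
Proof. by exists [:: j]; rewrite /= mulmx1. Qed.
Lemma inW0_1 : inW0 alpha 1%:M.
Proof. by exists [::]. Qed.

Lemma reindex M (F : V -> R) : orth M ->
  (forall a, a \in Phi -> M *m a \in Phi) ->
  (forall a, a \in Phi -> M^T *m a \in Phi) ->
  \sum_(a <- Phi) F a = \sum_(a <- Phi) F (M *m a).
Proof.
move=> o h1 h2; rewrite -(big_map (mulmx M) xpredT F); apply: perm_big.
have inj : injective (mulmx M : V -> V).
  by move=> x y e; rewrite -[x]mul1mx -o -mulmxA e mulmxA o mul1mx.
apply: uniq_perm; rewrite ?(map_inj_uniq inj) ?Phi_uniq // => x.
apply/idP/mapP => [xP|[y yP ->]]; last exact: h1.
by exists (M^T *m x); rewrite ?h2 // mulmxA orthC // mul1mx.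
Qed.

Lemma reindexW w (F : V -> R) : inW0 alpha w ->
  \sum_(a <- Phi) F a = \sum_(a <- Phi) F (w *m a).
Proof.
move=> hw; apply: reindex; [exact: inW0_orth | by move=> a; apply: inW0_Phi |].
by move=> a; apply/inW0_Phi/inW0_tr.
Qed.

Lemma reindexR b (F : V -> R) : b \in Phi ->
  \sum_(a <- Phi) F a = \sum_(a <- Phi) F (refl b *m a).
Proof.
move=> bP; apply: reindex; first exact/orth_refl/root_neq0.
  by move=> a; apply: refl_Phi.
by move=> a; rewrite refl_tr; apply: refl_Phi.
Qed.

Lemma Amat_mul (c : V) : Amat *m c = \sum_i c i 0 *: alpha i.
Proof.
apply/matrixP=> i j; rewrite (ord1 j) !mxE summxE; apply: eq_bigr => k _.
by rewrite !mxE mulrC.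
Qed.

Lemma alpha_indep (c : 'I_n -> R) : \sum_j c j *: alpha j = 0 -> forall j, c j = 0.
Proof. by case: hbase => _ h _; apply: h. Qed.

Lemma Amat_unit : Amat \in unitmx.
Proof.
rewrite -unitmx_tr -row_free_unit -kermx_eq0; apply/negPn/negP => nz.
have [i ri] : exists i, row i (kermx Amat^T) != 0.
  apply/existsP; apply: contraR nz => /existsPn h.
  apply/eqP/row_matrixP => i; rewrite row0; exact/eqP/negPn/h.
set u := row i _ in ri.
have h : Amat *m u^T = 0.
  by rewrite -[Amat]trmxK -trmx_mul /u -row_mul mulmx_ker row0 trmx0.
rewrite Amat_mul in h; have := alpha_indep h => c0.
by move/eqP: ri; apply; apply/rowP => k; have := c0 k; rewrite !mxE.
Qed.

Lemma coordsK x : Amat *m coords x = x.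
Proof. by rewrite /Defs.coords mulmxA mulmxV ?Amat_unit // mul1mx. Qed.

Lemma coords_expand x : x = \sum_i coords x i 0 *: alpha i.
Proof. by rewrite -Amat_mul coordsK. Qed.

Lemma coords_Amat c : coords (Amat *m c) = c.
Proof. by rewrite /Defs.coords mulmxA mulVmx ?Amat_unit // mul1mx. Qed.

Lemma coords_comb (c : 'I_n -> R) i : coords (\sum_j c j *: alpha j) i 0 = c i.
Proof.
have -> : \sum_j c j *: alpha j = Amat *m (\col_j c j).
  by rewrite Amat_mul; apply: eq_bigr => j _; rewrite mxE.
by rewrite coords_Amat mxE.
Qed.

Lemma coordsD x y i : coords (x + y) i 0 = coords x i 0 + coords y i 0.
Proof. by rewrite /Defs.coords mulmxDr mxE. Qed.
Lemma coordsZ c x i : coords (c *: x) i 0 = c * coords x i 0.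
Proof. by rewrite /Defs.coords -scalemxAr mxE. Qed.
Lemma coordsN x i : coords (- x) i 0 = - coords x i 0.
Proof. by rewrite -scaleN1r coordsZ mulN1r. Qed.
Lemma coordsB x y i : coords (x - y) i 0 = coords x i 0 - coords y i 0.
Proof. by rewrite coordsD coordsN. Qed.
Lemma coords_alpha j i : coords (alpha j) i 0 = (i == j)%:R.
Proof.
rewrite (_ : alpha j = \sum_k (k == j)%:R *: alpha k) ?coords_comb //.
rewrite (bigD1 j) //= eqxx scale1r big1 ?addr0 // => k /negPf ->.
by rewrite scale0r.
Qed.
Lemma coords_eq0 x : (forall i, coords x i 0 = 0) -> x = 0.
Proof.
move=> h; rewrite (coords_expand x) big1 // => i _; by rewrite h scale0r.
Qed.

Lemma pairing_coords y x : pairing y x = \sum_i coords x i 0 * pairing y (alpha i).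
Proof.
by rewrite {1}(coords_expand x) pairing_sumr; apply: eq_bigr => i _; rewrite pairingZr.
Qed.

Lemma root_coords b : b \in Phi -> exists c : 'I_n -> nat,
  (forall i, coords b i 0 = (c i)%:R) \/ (forall i, coords b i 0 = - (c i)%:R).
Proof.
case: hbase => _ _ h /h [c [->|->]]; exists c; [left|right] => i.
  by rewrite coords_comb.
by rewrite coordsN coords_comb.
Qed.

Lemma posrootE b : posroot b = (b \in Phi) && [forall j, 0 <= coords b j 0].
Proof. by []. Qed.

Lemma posroot_Phi b : posroot b -> b \in Phi.
Proof. by case/andP. Qed.

Lemma posroot_coords b : posroot b -> forall i, 0 <= coords b i 0.
Proof. by case/andP => _ /forallP. Qed.

Lemma nonpos_notpos b : b \in Phi -> (forall i, coords b i 0 <= 0) -> ~~ posroot b.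
Proof.
move=> bP h; apply/negP => /posroot_coords h2.
have e : b = 0 by apply: coords_eq0 => i; apply/le_anti; rewrite h h2.
by move/root_neq0: bP; rewrite e eqxx.
Qed.

Lemma notpos_coords b : b \in Phi -> ~~ posroot b -> forall i, coords b i 0 <= 0.
Proof.
move=> bP; have [c [h|h]] := root_coords bP.
  by rewrite posrootE bP /=; case/forallPn => i; rewrite h ler0n.
by move=> _ i; rewrite h oppr_le0 ler0n.
Qed.

Lemma posrootN b : b \in Phi -> posroot (- b) = ~~ posroot b.
Proof.
move=> bP; apply/idP/idP => [/posroot_coords h|h].
  by apply: nonpos_notpos => // i; have := h i; rewrite coordsN oppr_ge0.
rewrite posrootE opp_Phi //=; apply/forallP => i.
by rewrite coordsN oppr_ge0 notpos_coords.
Qed.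

(* the vector rp with (rp, alpha_i) = 1 *)
Definition rp : V := invmx Amat^T *m const_mx 1.

Lemma pairing_rp x : pairing rp x = \sum_i coords x i 0.
Proof.
rewrite -{1}(coordsK x) pairingC pairing_mull pairingC.
rewrite /rp mulmxA mulmxV ?unitmx_tr ?Amat_unit // mul1mx pairingE.
by apply: eq_bigr => i _; rewrite mxE mul1r.
Qed.

Lemma pos_rp b : posroot b -> 0 < pairing rp b.
Proof.
move=> bp; rewrite pairing_rp lt_def psumr_eq0 => [|i _]; last exact: posroot_coords.
rewrite sumr_ge0 ?andbT => [|i _]; last exact: posroot_coords.
apply/negP => /allP h; move/negP: (root_neq0 (posroot_Phi bp)); apply.
by apply/eqP/coords_eq0 => i; apply/eqP/h; rewrite mem_index_enum.
Qed.

Lemma neg_rp b : b \in Phi -> ~~ posroot b -> pairing rp b < 0.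
Proof.
by move=> bP nb; rewrite -oppr_gt0 -pairingNr pos_rp // posrootN.
Qed.

Lemma posroot_rp b : b \in Phi -> posroot b = (0 < pairing rp b).
Proof.
move=> bP; apply/idP/idP; first exact: pos_rp.
by apply: contraTT => nb; rewrite -leNgt ltW // neg_rp.
Qed.


Lemma posroot_alpha j : posroot (alpha j).
Proof.
by rewrite posrootE alpha_Phi; apply/forallP => i; rewrite coords_alpha ler0n.
Qed.

Lemma sref_E j x : sref j *m x = x - pairing x (coroot (alpha j)) *: alpha j.
Proof. exact: reflE. Qed.

Lemma sref_pos_aux j d : posroot d -> d != alpha j -> posroot (sref j *m d).
Proof.
move=> dp dne; have dP := posroot_Phi dp.
have sP : sref j *m d \in Phi by apply: refl_Phi; rewrite ?alpha_Phi.
have [i /andP[ij ci]] : exists i, (i != j) && (0 < coords d i 0).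
  apply/existsP; apply: contraT => /existsPn h.
  have e : d = coords d j 0 *: alpha j.
    rewrite {1}(coords_expand d) (bigD1 j) //= big1 ?addr0 // => i ij.
    have := h i; rewrite ij /= -leNgt => le0.
    by rewrite (@le_anti _ _ (coords d i 0) 0) ?le0 ?posroot_coords // scale0r.
  have := reduced (alpha_Phi j) (_ : coords d j 0 *: alpha j \in Phi).
  rewrite -e => /(_ dP) [c1|c1].
    by move: dne; rewrite e c1 scale1r eqxx.
  by move: dp; rewrite e c1 scaleN1r posrootN ?alpha_Phi // posroot_alpha.
apply/negPn/negP => np.
have := notpos_coords sP np i; rewrite sref_E coordsB coordsZ coords_alpha.
by rewrite (negPf ij) mulr0 subr0 leNgt ci.
Qed.

Lemma sref_pos j d : d \in Phi -> d != alpha j -> d != - alpha j ->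
  posroot (sref j *m d) = posroot d.
Proof.
move=> dP d1 d2; have [dp|dn] := boolP (posroot d); first exact: sref_pos_aux.
apply/negP => sp.
have p2 : posroot (- d) by rewrite posrootN.
have n2 : - d != alpha j by rewrite eqr_oppLR.
have := sref_pos_aux p2 n2; rewrite mulmxN posrootN ?sp //.
by apply: refl_Phi => //; rewrite alpha_Phi.
Qed.

Lemma sref_alpha j : sref j *m alpha j = - alpha j.
Proof. exact/refl_self/alpha_neq0. Qed.

Lemma sref_invol j : sref j *m sref j = 1%:M.
Proof. exact/refl_invol/alpha_neq0. Qed.

Lemma coroot_sign (x a : V) : a != 0 ->
  (0 < pairing x (coroot a) = (0 < pairing x a)) /\
  (pairing x (coroot a) < 0 = (pairing x a < 0)) /\
  (pairing x (coroot a) == 0) = (pairing x a == 0).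
Proof.
move=> nz; have hp : 0 < 2 / pairing a a by rewrite divr_gt0 ?pairing_self_gt0.
by rewrite corootE pmulr_rgt0 // pmulr_rlt0 // mulf_eq0 (negPf (lt0r_neq0 hp)).
Qed.

Local Notation inJ := (inJ alpha Lam).
Local Notation posrootJ := (posrootJ Phi alpha Lam).

Lemma LamA_ge0 i : 0 <= pairing Lam (alpha i).
Proof.
have [m hm] := hLam i; have [_ [h _]] := coroot_sign Lam (alpha_neq0 i).
by rewrite leNgt -h hm -leNgt ler0n.
Qed.

Lemma inJE i : inJ i = (pairing Lam (alpha i) == 0).
Proof. by have [_ [_ h]] := coroot_sign Lam (alpha_neq0 i); rewrite /Defs.inJ h. Qed.

Lemma Lam_pos_ge0 b : posroot b -> 0 <= pairing Lam b.
Proof.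
move=> bp; rewrite pairing_coords sumr_ge0 // => i _.
by rewrite mulr_ge0 ?LamA_ge0 ?posroot_coords.
Qed.

Lemma Lam_notpos_le0 b : b \in Phi -> ~~ posroot b -> pairing Lam b <= 0.
Proof.
move=> bP nb; rewrite -oppr_ge0 -pairingNr Lam_pos_ge0 // posrootN //.
Qed.

Lemma posrootJE b : posrootJ b = posroot b && (pairing Lam b == 0).
Proof.
rewrite /Defs.posrootJ; case bp: (posroot b) => //=.
rewrite pairing_coords psumr_eq0 => [|i _]; last by rewrite mulr_ge0 ?LamA_ge0 ?posroot_coords.
apply/forallP/allP => [h i _|h i].
  rewrite mulf_eq0; have := h i; rewrite inJE.
  by case: (pairing Lam (alpha i) == 0) => /=; [rewrite orbT | move=> ->].
rewrite inJE; apply/implyP => nJ; have := h i (mem_index_enum i).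
by rewrite mulf_eq0 (negPf nJ) orbF.
Qed.

Lemma PhiprimeE b : b \in Phi -> (posroot b && ~~ posrootJ b) = (0 < pairing Lam b).
Proof.
move=> bP; rewrite posrootJE; case bp: (posroot b) => /=.
  by rewrite lt_def Lam_pos_ge0 ?andbT.
by apply/esym/negbTE; rewrite -leNgt Lam_notpos_le0 ?bp.
Qed.

Lemma sref_Lam i : inJ i -> sref i *m Lam = Lam.
Proof. by move=> /eqP h; rewrite sref_E h scale0r subr0. Qed.

Lemma WJ_word s : all inJ s -> wordmx s *m Lam = Lam.
Proof.
elim: s => [|a s IH] /=; first by rewrite mul1mx.
by case/andP => ha hs; rewrite -mulmxA IH // sref_Lam.
Qed.

Lemma WJ_Lam v : inWJ alpha Lam v -> v *m Lam = Lam.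
Proof. by case=> s [hs <-]; exact: WJ_word. Qed.

Lemma inWJ_W0 v : inWJ alpha Lam v -> inW0 alpha v.
Proof. by case=> s [_ <-]; exists s. Qed.

Lemma inWJ_mul v v' : inWJ alpha Lam v -> inWJ alpha Lam v' -> inWJ alpha Lam (v *m v').
Proof.
by case=> s [hs <-] [t [ht <-]]; exists (s ++ t); rewrite all_cat hs ht wordmx_cat.
Qed.

Lemma inWJ_tr v : inWJ alpha Lam v -> inWJ alpha Lam v^T.
Proof. by case=> s [hs <-]; exists (rev s); rewrite all_rev hs wordmx_tr. Qed.

Lemma inWJ_1 : inWJ alpha Lam 1%:M.
Proof. by exists [::]. Qed.

Lemma rho_pairing x :
  2 * pairing (rho Phi alpha - rhoJ Phi alpha Lam) x =
  \sum_(a <- Phi | 0 < pairing Lam a) pairing a x.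
Proof.
rewrite /rho /rhoJ -scalerBr pairingZl mulrA divff ?mul1r ?pnatr_eq0 //.
rewrite (bigID posrootJ) /= addrAC.
have -> : \sum_(i <- Phi | posroot i && posrootJ i) i = \sum_(i <- Phi | posrootJ i) i.
  by apply: eq_bigl => a; rewrite posrootJE; case: (posroot a).
rewrite subrr add0r pairing_suml big_seq_cond [RHS]big_seq_cond.
by apply: eq_bigl => a; case aP: (a \in Phi) => //=; rewrite PhiprimeE.
Qed.

Definition ind (b : bool) : R := (b : nat)%:R.

Lemma ind_and a b : ind (a && b) = ind a * ind b.
Proof. by case: a; case: b; rewrite /ind /= ?mulr1 ?mulr0 ?mul1r ?mul0r. Qed.
Lemma ind_ge0 b : 0 <= ind b. Proof. by rewrite /ind ler0n. Qed.
Lemma ind_le1 b : ind b <= 1. Proof. by case: b; rewrite /ind ?ler01. Qed.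

Lemma sum_single (s : seq V) x (G : V -> R) : uniq s -> x \in s ->
  (forall d, d \in s -> d != x -> G d = 0) -> \sum_(d <- s) G d = G x.
Proof.
move=> us xs h; rewrite (big_rem x) //= big_seq big1 ?addr0 // => d.
rewrite mem_rem_uniq // inE => /andP [dx ds]; exact: h.
Qed.

Lemma sum_ge_single (s : seq V) x (G : V -> R) : x \in s ->
  (forall d, d \in s -> 0 <= G d) -> G x <= \sum_(d <- s) G d.
Proof.
move=> xs h; rewrite (big_rem x) //= lerDl big_seq sumr_ge0 // => d.
by move/mem_rem; apply: h.
Qed.

Definition NR (mu : V) : R := \sum_(d <- Phi) ind (~~ posroot d && (0 < pairing mu d)).

Lemma NR_ge0 mu : 0 <= NR mu.
Proof. by rewrite sumr_ge0 // => d _; apply: ind_ge0. Qed.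

Lemma NR_W w mu : inW0 alpha w ->
  NR (w *m mu) = \sum_(d <- Phi) ind (~~ posroot (w *m d) && (0 < pairing mu d)).
Proof.
move=> hw; rewrite /NR (reindexW _ hw); apply: eq_bigr => d _.
by rewrite pairing_orth //; apply: inW0_orth.
Qed.

Lemma NR_refl_diff th mu : th \in Phi ->
  NR mu - NR (refl th *m mu) =
  \sum_(d <- Phi) ind (0 < pairing mu d) * (ind (~~ posroot d) - ind (~~ posroot (refl th *m d))).
Proof.
move=> tP; rewrite {2}/NR (reindexR _ tP) /NR -sumrB; apply: eq_bigr => d _.
by rewrite pairing_refl ?root_neq0 // !ind_and mulrBr !(mulrC (ind (0 < _))).
Qed.

Lemma refl_coroot (th d : V) : th != 0 ->
  pairing (refl th *m d) (coroot th) = - pairing d (coroot th).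
Proof.
move=> nz; have h := pairing_refl d th nz; rewrite refl_self // pairingNr in h.
by rewrite /coroot !pairingZr -h mulrN opprK.
Qed.

Lemma antisym_sum th mu (F : V -> R) : th \in Phi -> 0 < pairing mu th ->
  (forall d, F (refl th *m d) = - F d) ->
  (forall d, pairing d (coroot th) = 0 -> F d = 0) ->
  \sum_(d <- Phi) ind (0 < pairing mu d) * F d =
  \sum_(d <- Phi) ind ([&& 0 < pairing mu d, 0 < pairing d (coroot th)
                         & ~~ (0 < pairing mu (refl th *m d))]) * F d.
Proof.
move=> tP mt hF h0; have nz := root_neq0 tP.
set k := fun d => pairing d (coroot th).
have e1 : \sum_(d <- Phi) ind (0 < pairing mu d) * F d =
   \sum_(d <- Phi) (ind ((0 < pairing mu d) && (0 < k d)) * F d +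
                    ind ((0 < pairing mu d) && (k d < 0)) * F d).
  apply: eq_bigr => d _; rewrite !ind_and -mulrDl -mulrDr.
  case: (ltgtP (k d) 0) => hk; rewrite /ind /= ?add0r ?addr0 ?mul1r ?mulr1 //.
  by rewrite h0 // !mulr0.
rewrite e1 big_split /= [X in _ + X](reindexR _ tP) -big_split /=.
apply: eq_bigr => d _.
rewrite hF /k refl_coroot // oppr_lt0 mulrN -mulrBl; congr (_ * _).
have hr : pairing mu (refl th *m d) = pairing mu d - pairing d (coroot th) * pairing mu th.
  by rewrite reflE pairingBr pairingZr.
rewrite hr; case: (ltrP 0 (pairing d (coroot th))) => hk /=; last first.
  by rewrite /ind !andbF subrr.
case: (ltrP 0 (pairing mu d)) => hm /=.
  by case: (ltrP 0 _) => h2; rewrite /ind /= ?subrr ?subr0.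
have : pairing mu d - pairing d (coroot th) * pairing mu th < 0.
  by rewrite subr_lt0 (le_lt_trans hm) // mulr_gt0.
by move=> /ltW; rewrite leNgt => /negPf ->; rewrite /ind /= subrr.
Qed.

Definition gdiff th d := ind (~~ posroot d) - ind (~~ posroot (refl th *m d)).

Lemma gdiff_anti th d : th \in Phi -> gdiff th (refl th *m d) = - gdiff th d.
Proof.
by move=> tP; rewrite /gdiff mulmxA refl_invol ?root_neq0 // mul1mx opprB.
Qed.

Lemma gdiff0 th d : pairing d (coroot th) = 0 -> gdiff th d = 0.
Proof. by move=> h; rewrite /gdiff reflE h scale0r subr0 subrr. Qed.

Lemma ind_true : ind true = 1. Proof. by []. Qed.
Lemma ind_false : ind false = 0. Proof. by []. Qed.

Lemma posroot_notneg th : posroot th -> ~~ posroot (- th).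
Proof. by move=> tp; rewrite posrootN ?posroot_Phi // tp. Qed.

Lemma int_ge1 (x : R) : (exists z : int, x = z%:~R) -> 0 < x -> 1 <= x.
Proof. by case=> z ->; rewrite ltr0z ler1z gtz0_ge1. Qed.

Lemma LB th mu : posroot th -> 0 < pairing mu th ->
  NR mu - NR (refl th *m mu) <= -1.
Proof.
move=> tp mt; have tP := posroot_Phi tp; have nz := root_neq0 tP.
rewrite NR_refl_diff // (antisym_sum (th := th) (mu := mu) (F := gdiff th)) //; last first.
  - exact: gdiff0.
  - by move=> d; apply: gdiff_anti.
rewrite -[X in X <= _]opprK -sumrN lerNl opprK.
apply: (le_trans _ (sum_ge_single tP _)) => [|d dP].
  rewrite mt coroot_self // refl_self // pairingNr oppr_gt0 ltr0n /= ltNge (ltW mt) /=.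
  by rewrite ind_true mul1r /gdiff refl_self // (negPf (posroot_notneg tp)) tp opprB subr0.
rewrite oppr_ge0; case hc: [&& _, _ & _]; last by rewrite mul0r.
case/and3P: hc => _ hk _; rewrite mul1r /gdiff.
case dp: (posroot d) => /=; first by rewrite subr_le0 ind_ge0.
suff -> : ~~ posroot (refl th *m d) by rewrite subrr.
apply: nonpos_notpos; first exact: refl_Phi.
move=> i; rewrite reflE coordsB coordsZ subr_le0 (le_trans (notpos_coords dP (negbT dp) i)) //.
by rewrite mulr_ge0 ?posroot_coords // ltW.
Qed.

Definition Ssum mu th := \sum_(d <- Phi | 0 < pairing mu d) pairing d (coroot th).

Lemma LQ th mu : th \in Phi -> 0 < pairing mu th ->
  NR mu - NR (refl th *m mu) <= Ssum mu th - 1.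
Proof.
move=> tP mt; have nz := root_neq0 tP.
rewrite NR_refl_diff // /Ssum [X in _ <= X - 1]big_mkcond /=.
have -> : \sum_(d <- Phi) (if 0 < pairing mu d then pairing d (coroot th) else 0) =
          \sum_(d <- Phi) ind (0 < pairing mu d) * pairing d (coroot th).
  by apply: eq_bigr => d _; case: ifP; rewrite /ind /= ?mul1r ?mul0r.
rewrite (antisym_sum (th := th) (mu := mu) (F := gdiff th)) //; last first.
  - exact: gdiff0.
  - by move=> d; apply: gdiff_anti.
rewrite (antisym_sum (th := th) (mu := mu) (F := fun d => pairing d (coroot th))) //; last first.
  by move=> d; rewrite refl_coroot.
rewrite lerBrDr -lerBrDl -sumrB.
apply: (le_trans _ (sum_ge_single tP _)) => [|d dP].
  rewrite mt coroot_self // refl_self // pairingNr oppr_gt0 ltr0n /= ltNge (ltW mt) /=.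
  rewrite ind_true !mul1r lerBrDl -lerBrDr /gdiff.
  have h1 := ind_le1 (~~ posroot th); have h2 := ind_ge0 (~~ posroot (refl th *m th)); lra.
rewrite -mulrBr; case hc: [&& _, _ & _]; last by rewrite mul0r.
case/and3P: hc => _ hk _; rewrite mul1r subr_ge0 /gdiff.
apply: (le_trans (lerB (ind_le1 _) (ind_ge0 _))); rewrite subr0.
by apply: int_ge1 => //; apply: coroot_int.
Qed.

Lemma NR_sref_pos j mu : 0 < pairing mu (alpha j) -> NR (sref j *m mu) = NR mu + 1.
Proof.
move=> h; have aP := alpha_Phi j.
suff : NR mu - NR (sref j *m mu) = -1.
  by move=> e; lra.
rewrite NR_refl_diff // (sum_single (x := alpha j)) ?Phi_uniq //.
  rewrite h ind_true mul1r /gdiff refl_self ?alpha_neq0 //.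
  by rewrite (negPf (posroot_notneg (posroot_alpha j))) posroot_alpha /ind /= sub0r.
move=> d dP dn; case: (d =P - alpha j) => [->|/eqP dn2].
  by rewrite pairingNr oppr_gt0 ltNge (ltW h) mul0r.
by rewrite (sref_pos dP dn dn2) subrr mulr0.
Qed.

Lemma sref_pairing j mu : pairing (sref j *m mu) (alpha j) = - pairing mu (alpha j).
Proof.
have h := pairing_refl mu (alpha j) (alpha_neq0 j); rewrite refl_self ?alpha_neq0 // pairingNr in h.
by rewrite -h opprK.
Qed.

Lemma NR_sref_neg j mu : pairing mu (alpha j) < 0 -> NR (sref j *m mu) = NR mu - 1.
Proof.
move=> h; have h2 : 0 < pairing (sref j *m mu) (alpha j) by rewrite sref_pairing oppr_gt0.
have := NR_sref_pos h2; rewrite mulmxA sref_invol mul1mx => ->.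
by rewrite addrK.
Qed.

Lemma sref_fix j mu : pairing mu (alpha j) = 0 -> sref j *m mu = mu.
Proof.
move=> h; rewrite sref_E corootE h mulr0 scale0r subr0 //.
Qed.

Lemma NR_sref j mu : NR (sref j *m mu) =
  NR mu + ind (0 < pairing mu (alpha j)) - ind (pairing mu (alpha j) < 0).
Proof.
case: (ltgtP (pairing mu (alpha j)) 0) => h; rewrite /ind /= ?addr0 ?subr0.
- by rewrite NR_sref_neg.
- by rewrite NR_sref_pos.
- by rewrite sref_fix.
Qed.

Local Notation ell := (ell alpha).

Lemma minP (Q : nat -> Prop) k : Q k -> exists m, Q m /\ forall k', Q k' -> (m <= k')%N.
Proof.
elim: k {-2}k (leqnn k) => [|k IH] k0 hk Qk.
  by exists k0; split => // k' _; move: hk; rewrite leqn0 => /eqP ->.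
case: (classic (exists k', (k' < k0)%N /\ Q k')) => [[k' [lt Qk']]|nx].
  by apply: (IH k') => //; rewrite -ltnS (leq_trans lt).
exists k0; split => // k' Qk'; rewrite leqNgt; apply/negP => lt; apply: nx.
by exists k'.
Qed.

Lemma has_wordP w k : has_word_of_size alpha w k <-> exists s, size s = k /\ wordmx s = w.
Proof.
split => [/existsP [t /eqP <-]|[s [<- <-]]]; first by exists t; rewrite size_tuple.
by apply/existsP; exists (in_tuple s).
Qed.

Lemma ellP w : inW0 alpha w ->
  (exists s, size s = ell w /\ wordmx s = w) /\ (forall s, wordmx s = w -> (ell w <= size s)%N).
Proof.
move=> [s0 hs0]; rewrite /Defs.ell.
case: excluded_middle_informative => [h|nh]; last first.
  by exfalso; apply: nh; exists (size s0); apply/has_wordP; exists s0.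
case: ex_minnP => m /has_wordP hm hmin; split => // s hs.
by apply: hmin; apply/has_wordP; exists s.
Qed.

Lemma ell_le s : (ell (wordmx s) <= size s)%N.
Proof. by have [_ h] := ellP (ex_intro _ s erefl); apply: h. Qed.

Lemma NR_rp0 : NR rp = 0.
Proof.
rewrite /NR big_seq big1 // => d dP; case dp: (posroot d) => //=.
by rewrite ltNge ltW ?neg_rp ?dp.
Qed.

Lemma NR_Lam0 : NR Lam = 0.
Proof.
rewrite /NR big_seq big1 // => d dP; case dp: (posroot d) => //=.
by rewrite ltNge Lam_notpos_le0 ?dp.
Qed.

Lemma NR_word_le s mu : NR (wordmx s *m mu) <= NR mu + (size s)%:R.
Proof.
elim: s => [|j s IH] /=; first by rewrite mul1mx addr0.
rewrite -mulmxA NR_sref; set p := pairing _ _.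
have h1 := ind_le1 (0 < p); have h2 := ind_ge0 (p < 0).
rewrite -[(size s).+1]addn1 natrD; lra.
Qed.

Lemma NR_ell_le x mu : inW0 alpha x -> NR mu = 0 -> NR (x *m mu) <= (ell x)%:R.
Proof.
move=> hx h0; have [[s [hs es]] _] := ellP hx.
by rewrite -hs -es; have := NR_word_le s mu; rewrite h0 add0r.
Qed.

Lemma exch t g : posroot g -> ~~ posroot ((wordmx t)^T *m g) ->
  exists t1 a t2, t = t1 ++ a :: t2 /\ refl g *m wordmx t = wordmx (t1 ++ t2).
Proof.
elim: t g => [|a t IH] g gp /=; first by rewrite trmx1 mul1mx gp.
rewrite trmx_mul /sref refl_tr -/(sref a) -mulmxA => np.
case: (g =P alpha a) => [->|/eqP ga].
  by exists [::], a, t; rewrite mulmxA sref_invol mul1mx.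
have gp' := sref_pos_aux gp ga.
have [t1 [a' [t2 [-> e]]]] := IH _ gp' np.
exists (a :: t1), a', t2; split => //=.
have := refl_conj (sref_orth a) (root_neq0 (posroot_Phi gp)).
rewrite /sref refl_tr -/(sref a) => hc.
by rewrite -e hc !mulmxA sref_invol mul1mx.
Qed.

Lemma W0_sign y a : inW0 alpha y -> a \in Phi -> pairing (y *m rp) a != 0.
Proof.
move=> hy aP; rewrite pairing_mull.
have yaP : y^T *m a \in Phi by apply: inW0_Phi => //; apply: inW0_tr.
case ap: (posroot (y^T *m a)); first by rewrite gt_eqF ?pos_rp.
by rewrite lt_eqF ?neg_rp ?ap.
Qed.

Lemma del s : NR (wordmx s *m rp) < (size s)%:R ->
  exists s', (size s' < size s)%N /\ wordmx s' = wordmx s.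
Proof.
elim: s => [|j t IH] /=; first by rewrite mul1mx NR_rp0 ltxx.
case: (ltrP (NR (wordmx t *m rp)) (size t)%:R) => [lt _|ge].
  have [t' [st' et']] := IH lt; exists (j :: t'); split => //=; by rewrite et'.
rewrite -mulmxA NR_sref; set p := pairing _ _ => lt.
have hp := W0_sign (ex_intro _ t erefl) (alpha_Phi j).
rewrite -/p in hp.
have pn : p < 0.
  case: (ltgtP p 0) hp => // hp' _.
  have e1 : ind (0 < p) = 1 by rewrite hp'.
  have e2 : ind (p < 0) = 0 by rewrite ltNge (ltW hp').
  move: lt; rewrite e1 e2 -[(size t).+1]addn1 natrD => h; lra.
have np : ~~ posroot ((wordmx t)^T *m alpha j).
  apply/negP => ps; move: pn; rewrite /p pairing_mull.
  by rewrite ltNge ltW ?pos_rp.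
have [t1 [a [t2 [et e]]]] := exch (posroot_alpha j) np.
exists (t1 ++ t2); split; last by rewrite e.
by rewrite et !size_cat /= addnS ltnS leqnSn.
Qed.

Lemma ell_rp y : inW0 alpha y -> (ell y)%:R = NR (y *m rp).
Proof.
move=> hy; apply/le_anti/andP; split; last exact: NR_ell_le NR_rp0.
have [[s [hs es]] hmin] := ellP hy.
case: (ltrP (NR (y *m rp)) (size s)%:R) => [lt|]; last by rewrite hs.
rewrite -es in lt; have [s' [ls' es']] := del lt.
have := hmin s'; rewrite es' es => /(_ erefl) h.
by move: (leq_ltn_trans h ls'); rewrite hs ltnn.
Qed.

Lemma ell_tr y : inW0 alpha y -> ell y^T = ell y.
Proof.
move=> hy; have hyt := inW0_tr hy.
have [[s [hs es]] hm] := ellP hy; have [[s' [hs' es']] hm'] := ellP hyt.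
apply/eqP; rewrite eqn_leq; apply/andP; split.
  by rewrite -hs -size_rev hm' // -es wordmx_tr.
by rewrite -hs' -size_rev hm // -wordmx_tr es' trmxK.
Qed.

Lemma ell_mul_sref y i : inW0 alpha y ->
  (ell (y *m sref i))%:R = (ell y)%:R + ind (posroot (y *m alpha i)) - ind (~~ posroot (y *m alpha i)).
Proof.
move=> hy; have hyt := inW0_tr hy.
have h1 : inW0 alpha (y *m sref i) by apply: inW0_mul => //; apply: inW0_sref.
rewrite -ell_tr // trmx_mul /sref refl_tr -/(sref i) ell_rp; last first.
  by apply: inW0_mul => //; apply: inW0_sref.
rewrite -mulmxA NR_sref -ell_rp // ell_tr //.
have e : pairing (y^T *m rp) (alpha i) = pairing rp (y *m alpha i).
  by rewrite pairing_mull trmxK.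
have yaP : y *m alpha i \in Phi by apply: inW0_Phi => //; apply: alpha_Phi.
rewrite e; case yp: (posroot (y *m alpha i)).
  by rewrite pos_rp // ltNge ltW ?pos_rp.
by rewrite neg_rp ?yp // ltNge ltW ?neg_rp ?yp.
Qed.

Definition good y := inW0 alpha y /\ forall i, inJ i -> posroot (y *m alpha i).

Lemma coords_sumE I (r : seq I) (P : pred I) (F : I -> V) k :
  coords (\sum_(i <- r | P i) F i) k 0 = \sum_(i <- r | P i) coords (F i) k 0.
Proof. by rewrite /Defs.coords mulmx_sumr summxE. Qed.

Lemma good_posJ y a : good y -> posrootJ a -> posroot (y *m a).
Proof.
move=> [hy hJ] /andP [ap /forallP h0].
rewrite posrootE inW0_Phi ?posroot_Phi //=; apply/forallP => k.
rewrite {1}(coords_expand a) mulmx_sumr coords_sumE sumr_ge0 // => i _.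
rewrite -scalemxAr coordsZ; case: (boolP (inJ i)) => iJ.
  by rewrite mulr_ge0 ?posroot_coords ?hJ.
by have := h0 i; rewrite iJ /= => /eqP ->; rewrite mul0r.
Qed.

Lemma good_ell y : good y -> (ell y)%:R = NR (y *m Lam).
Proof.
move=> gy; have hy := gy.1; rewrite ell_rp // !NR_W //.
rewrite big_seq [RHS]big_seq; apply: eq_bigr => d dP; congr ind.
case dp: (posroot d) => /=; last first.
  by rewrite ltNge ltW ?neg_rp ?dp // ltNge Lam_notpos_le0 ?dp // !andbF.
rewrite pos_rp //; case: (ltrP 0 (pairing Lam d)) => hl; first by rewrite andbT.
have e : pairing Lam d = 0 by apply/le_anti; rewrite hl Lam_pos_ge0.
by rewrite good_posJ // posrootJE dp e eqxx.
Qed.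

Lemma W0J_good y : inW0J alpha Lam y -> good y.
Proof.
move=> [hy hmin]; split => // i iJ; apply: contraT => np.
have hv : inWJ alpha Lam (sref i) by exists [:: i]; rewrite /= iJ mulmx1.
have h : (ell y)%:R <= (ell (y *m sref i))%:R :> R by rewrite ler_nat hmin.
rewrite ell_mul_sref // (negPf np) in h.
by move: h; rewrite /ind /=; lra.
Qed.

Lemma good_W0J y : good y -> inW0J alpha Lam y.
Proof.
move=> gy; split; first exact: gy.1.
move=> v hv; rewrite -(ler_nat R) good_ell // -{1}(WJ_Lam hv) mulmxA.
apply: NR_ell_le NR_Lam0; apply: inW0_mul gy.1 (inWJ_W0 hv).
Qed.

Lemma floor_spec x : inW0 alpha x ->
  good (floor alpha Lam x) /\ exists v, inWJ alpha Lam v /\ floor alpha Lam x = x *m v.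
Proof.
move=> hx.
have ex : exists u, inW0J alpha Lam u /\ exists v, inWJ alpha Lam v /\ u = x *m v.
  have [m [[v [hv hm]] hmin]] := minP (Q := fun k => exists v, inWJ alpha Lam v /\ ell (x *m v) = k)
     (ex_intro _ 1%:M (conj inWJ_1 erefl)).
  exists (x *m v); split; last by exists v.
  split; first exact: inW0_mul hx (inWJ_W0 hv).
  move=> v' hv'; rewrite hm -mulmxA; apply: hmin; exists (v *m v'); split => //.
  exact: inWJ_mul.
rewrite /floor; case: excluded_middle_informative => [h|//].
case: constructive_indefinite_description => u /= [hu [v [hv e]]].
by split; [exact: W0J_good | exists v].
Qed.

Lemma floor_unique u u' v : good u -> good u' -> inWJ alpha Lam v -> u' = u *m v -> u' = u.
Proof.
move=> gu gu' hv e; have hv0 := inWJ_W0 hv.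
suff v1 : v = 1%:M by rewrite e v1 mulmx1.
have [[s [hs es]] _] := ellP hv0.
case: (posnP (ell v)) => [l0|lpos].
  by rewrite -es; move: hs; rewrite l0; case: s {es}.
exfalso; have : 0 < NR (v *m rp) by rewrite -ell_rp // ltr0n.
rewrite NR_W //; case: (boolP (has (fun d => ~~ posroot (v *m d) && (0 < pairing rp d)) Phi)).
  move=> /hasP [a aP /andP [nva pa]] _.
  have ap : posroot a by rewrite posroot_rp.
  have vaP : v *m a \in Phi by apply: inW0_Phi.
  have e1 : pairing Lam a = pairing Lam (v *m a).
    by rewrite -{2}(WJ_Lam hv) pairing_orth //; apply: inW0_orth.
  have e0 : pairing Lam a = 0.
    by apply/le_anti; rewrite Lam_pos_ge0 // e1 Lam_notpos_le0.
  have hJ1 : posrootJ a by rewrite posrootJE ap e0 eqxx.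
  have hJ2 : posrootJ (- (v *m a)) by rewrite posrootJE posrootN // nva pairingNr -e1 e0 oppr0 eqxx.
  have := good_posJ gu hJ2; rewrite mulmxN posrootN; last by apply: inW0_Phi => //; exact: gu.1.
  by rewrite mulmxA -e good_posJ.
move=> /hasPn h0; rewrite big_seq big1 ?ltxx // => d dP.
by rewrite (negPf (h0 d dP)).
Qed.

Lemma floor_eq x u v : inW0 alpha x -> good u -> inWJ alpha Lam v -> u = x *m v ->
  floor alpha Lam x = u.
Proof.
move=> hx gu hv e; have [gf [v' [hv' ef]]] := floor_spec hx.
apply: (floor_unique gu gf (v := v^T *m v')); first exact: inWJ_mul (inWJ_tr hv) hv'.
by rewrite ef e -!mulmxA (mulmxA v) orthC ?mul1mx //; apply: inW0_orth; apply: inWJ_W0.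
Qed.

Lemma conj_simple k b : posroot b -> pairing rp b <= k%:R ->
  exists x i, inW0 alpha x /\ b = x *m alpha i.
Proof.
elim: k b => [|k IH] b bp hk.
  by move: (pos_rp bp); rewrite ltNge hk.
case: (boolP [exists i, b == alpha i]) => [/existsP [i /eqP ->]|nb].
  by exists 1%:M, i; rewrite mul1mx; split => //; apply: inW0_1.
have [i [hc hpi]] : exists i, 0 < coords b i 0 /\ 0 < pairing b (alpha i).
  apply: NNPP => hn.
  have : pairing b b <= 0.
    rewrite [X in pairing X _]coords_expand pairing_suml sumr_le0 // => i _.
    rewrite pairingZl; have := posroot_coords bp i; rewrite le_eqVlt.
    case/orP => [/eqP <-|ci]; first by rewrite mul0r.
    rewrite pmulr_rle0 // leNgt; apply/negP => h; apply: hn; exists i.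
    by rewrite pairingC.
  by rewrite leNgt pairing_self_gt0 // root_neq0 // posroot_Phi.
have bi : b != alpha i by apply: contra nb => /eqP ->; apply/existsP; exists i.
have bp' := sref_pos_aux bp bi.
have hz : 1 <= pairing b (coroot (alpha i)).
  apply: int_ge1; first by apply: coroot_int; rewrite ?alpha_Phi ?posroot_Phi.
  by have [h _] := coroot_sign b (alpha_neq0 i); rewrite h.
have : pairing rp (sref i *m b) <= k%:R.
  have sa : \sum_l coords (alpha i) l 0 = 1.
    rewrite (bigD1 i) //= coords_alpha eqxx big1 ?addr0 // => l li.
    by rewrite coords_alpha (negPf li).
  rewrite sref_E pairingBr pairingZr (pairing_rp (alpha i)) sa.
  rewrite mulr1; move: hk; rewrite -[k.+1]addn1 natrD; lra.
move=> /(IH _ bp') [x [l [hx e]]].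
exists (sref i *m x), l; split; first exact: inW0_mul (inW0_sref i) hx.
by rewrite -mulmxA -e mulmxA sref_invol mul1mx.
Qed.

Lemma posroot_nat b : posroot b -> exists m : nat, pairing rp b = m%:R.
Proof.
move=> bp; have [c [h|h]] := root_coords (posroot_Phi bp).
  by exists (\sum_i c i)%N; rewrite pairing_rp natr_sum; apply: eq_bigr => i _.
exfalso; move: (pos_rp bp); rewrite pairing_rp ltNge sumr_le0 // => i _.
by rewrite h oppr_le0.
Qed.

Lemma refl_W0 b : b \in Phi -> inW0 alpha (refl b).
Proof.
have key : forall b, posroot b -> inW0 alpha (refl b).
  move=> a ap; have [m hm] := posroot_nat ap.
  have hle : pairing rp a <= m%:R by rewrite hm.
  have [x [i [hx ->]]] := conj_simple ap hle.
  rewrite refl_conj ?alpha_neq0 //; last exact: inW0_orth.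
  by apply: inW0_mul; [apply: inW0_mul hx (inW0_sref i) | apply: inW0_tr].
move=> bP; case bp: (posroot b); first exact: key.
by rewrite -refl_opp; apply: key; rewrite posrootN ?bp.
Qed.

Local Notation rr := (rho Phi alpha - rhoJ Phi alpha Lam).

Lemma refl_pair (th mu : V) : th != 0 -> pairing (refl th *m mu) th = - pairing mu th.
Proof.
move=> nz; have h := pairing_refl mu th nz; rewrite refl_self // pairingNr in h.
by rewrite -h opprK.
Qed.

Lemma Ssum_W x (b : V) : inW0 alpha x -> b \in Phi ->
  Ssum (x *m Lam) (x *m b) = 2 * pairing rr (coroot b).
Proof.
move=> hx bP; rewrite rho_pairing /Ssum big_mkcond [RHS]big_mkcond (reindexW _ hx) /=.
have o := inW0_orth hx.
by apply: eq_bigr => d _; rewrite pairing_orth //; case: ifP => // _; rewrite !corootE !pairing_orth.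
Qed.

Lemma reflW x (b mu : V) : inW0 alpha x -> b \in Phi ->
  refl (x *m b) *m (x *m mu) = x *m refl b *m mu.
Proof.
move=> hx bP; have o := inW0_orth hx.
by rewrite refl_conj ?root_neq0 // -!mulmxA (mulmxA x^T) o mul1mx.
Qed.

Lemma core w (b : V) j : good w -> b \in Phi -> 0 < pairing Lam b ->
  (NR (w *m refl b *m Lam) = NR (w *m Lam) + 1 \/
   NR (w *m refl b *m Lam) = NR (w *m Lam) - 2 * pairing rr (coroot b) + 1) ->
  w *m b != alpha j -> w *m b != - alpha j ->
  ~ ((pairing (w *m refl b *m Lam) (alpha j) < 0 /\ 0 <= pairing (w *m Lam) (alpha j)) \/
     (pairing (w *m refl b *m Lam) (alpha j) <= 0 /\ 0 < pairing (w *m Lam) (alpha j))).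
Proof.
move=> gw bP Lb E n1 n2; have hw := gw.1.
set mu := w *m Lam; set mu' := w *m refl b *m Lam; set th := w *m b.
set p := pairing mu (alpha j); set q := pairing mu' (alpha j).
have thP : th \in Phi by apply: inW0_Phi.
have thnz := root_neq0 thP.
have emu' : mu' = refl th *m mu by rewrite /mu' /th /mu reflW.
have pt : 0 < pairing mu th by rewrite /mu /th pairing_orth //; apply: inW0_orth.
have hx : inW0 alpha (sref j *m w) by apply: inW0_mul (inW0_sref j) hw.
have e1 : sref j *m mu' = refl (sref j *m th) *m (sref j *m mu).
  by rewrite /mu' /th /mu (mulmxA (sref j) w b) (mulmxA (sref j) w Lam) reflW // !mulmxA.
have pt1 : 0 < pairing (sref j *m mu) (sref j *m th) by rewrite pairing_orth //; apply: sref_orth.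
have N1 := NR_sref j mu; have N2 := NR_sref j mu'.
rewrite -/p in N1; rewrite -/q in N2.
have i1 := ind_ge0 (0 < p); have i2 := ind_le1 (p < 0).
have i3 := ind_le1 (0 < q); have i4 := ind_ge0 (q < 0).
move=> H.
have hsign : NR (sref j *m mu) - NR (sref j *m mu') >= NR mu - NR mu' + 1.
  case: H => [[hq hp]|[hq hp]].
    have e3 : ind (q < 0) = 1 by rewrite hq.
    have e4 : ind (0 < q) = 0 by rewrite ltNge ltW.
    have e5 : ind (p < 0) = 0 by rewrite ltNge hp.
    lra.
  have e4 : ind (0 < q) = 0 by rewrite ltNge hq.
  have e5 : ind (p < 0) = 0 by rewrite ltNge ltW.
  have e6 : ind (0 < p) = 1 by rewrite hp.
  lra.
case: E => E; rewrite -/mu -/mu' in E.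
-
  have thp : posroot th.
    apply: contraT => nt.
    have : NR mu' - NR (refl (- th) *m mu') <= -1.
      apply: LB; first by rewrite posrootN.
      by rewrite emu' pairingNr refl_pair // opprK.
    rewrite refl_opp emu' mulmxA refl_invol // mul1mx -emu' => h'.
    lra.
  have thp1 : posroot (sref j *m th) by rewrite sref_pos.
  have := LB thp1 pt1; rewrite -e1 => h.
lra.
-
  have := LQ (th := sref j *m th) (mu := sref j *m mu) _ pt1.
  have hS : Ssum (sref j *m mu) (sref j *m th) = 2 * pairing rr (coroot b).
    by rewrite /mu /th !mulmxA Ssum_W.
  rewrite -e1 hS => /(_ _).
  have thP1 : sref j *m th \in Phi by apply: refl_Phi => //; apply: alpha_Phi.
  move=> /(_ thP1) h; lra.
Qed.

Lemma corootS (x a : V) : a != 0 ->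
  [/\ (0 < pairing x (coroot a)) = (0 < pairing x a),
      (pairing x (coroot a) < 0) = (pairing x a < 0),
      (0 <= pairing x (coroot a)) = (0 <= pairing x a)
    & (pairing x (coroot a) <= 0) = (pairing x a <= 0)].
Proof.
move=> nz; have [h1 [h2 _]] := coroot_sign x nz.
by rewrite h1 h2 !leNgt h1 h2.
Qed.

Lemma good_sref y j : good y -> pairing (y *m Lam) (alpha j) != 0 -> good (sref j *m y).
Proof.
move=> [hy hJ] nz; split; first exact: inW0_mul (inW0_sref j) hy.
move=> i iJ; have yp := hJ i iJ; have yP := posroot_Phi yp.
rewrite -mulmxA sref_pos //.
  apply: contra nz => /eqP <-; rewrite pairing_orth; last exact: inW0_orth.
  by move: iJ; rewrite inJE.
by apply/negP => /eqP e; move: yp; rewrite e posrootN ?alpha_Phi // posroot_alpha.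
Qed.

Lemma main (w : 'M[R]_n) (b : V)
  (hedge : qbg_edge Phi alpha Lam w b (floor alpha Lam (w *m refl b)))
  (j : 'I_n) :
  let u := floor alpha Lam (w *m refl b) in
  let aj := coroot (alpha j) in
  [/\ (0 < pairing (w *m Lam) aj -> w *m b != alpha j -> w *m b != - alpha j ->
        [/\ 0 < pairing (w *m refl b *m Lam) aj,
            inW0J alpha Lam (sref j *m u),
            inW0J alpha Lam (sref j *m w)
          & qbg_edge Phi alpha Lam (sref j *m w) b (sref j *m u)]),
      (pairing (w *m refl b *m Lam) aj < 0 -> w *m b != alpha j -> w *m b != - alpha j ->
        [/\ pairing (w *m Lam) aj < 0,
            inW0J alpha Lam (sref j *m u),
            inW0J alpha Lam (sref j *m w)
          & qbg_edge Phi alpha Lam (sref j *m w) b (sref j *m u)]),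
      (pairing (w *m refl b *m Lam) aj < 0 -> 0 <= pairing (w *m Lam) aj ->
        w *m b = alpha j \/ w *m b = - alpha j)
    & (pairing (w *m refl b *m Lam) aj <= 0 -> 0 < pairing (w *m Lam) aj ->
        w *m b = alpha j \/ w *m b = - alpha j)].
Proof.
move=> u aj; case: (hedge) => hw0J /andP [bp nbJ] _ hlen.
have gw := W0J_good hw0J; have hw := gw.1.
have bP := posroot_Phi bp.
have Lb : 0 < pairing Lam b by rewrite -PhiprimeE // bp nbJ.
have hx : inW0 alpha (w *m refl b) by apply: inW0_mul hw (refl_W0 bP).
have [gu [v [hv eu]]] := floor_spec hx; rewrite -/u in gu eu.
have uL : u *m Lam = w *m refl b *m Lam by rewrite eu -mulmxA WJ_Lam.
have ellw := good_ell gw; have ellu := good_ell gu; rewrite uL in ellu.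
have E : NR (w *m refl b *m Lam) = NR (w *m Lam) + 1 \/
   NR (w *m refl b *m Lam) = NR (w *m Lam) - 2 * pairing rr (coroot b) + 1.
  case: hlen => h; [left | right]; rewrite -ellu -ellw ?h //.
  by rewrite -natr1.
set P := pairing (w *m Lam) (alpha j); set Q := pairing (w *m refl b *m Lam) (alpha j).
have [s1 s2 s3 s4] := corootS (w *m Lam) (alpha_neq0 j).
have [t1 t2 t3 t4] := corootS (w *m refl b *m Lam) (alpha_neq0 j).
rewrite /aj s1 s2 s3 t1 t2 t4 -/P -/Q.
have hcore := fun n1 n2 => core gw bP Lb E (j := j) n1 n2.
rewrite -/P -/Q in hcore.
have hpm : (Q < 0 /\ 0 <= P) \/ (Q <= 0 /\ 0 < P) -> w *m b = alpha j \/ w *m b = - alpha j.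
  move=> H; case: (w *m b =P alpha j) => [|/eqP n1]; first by left.
  case: (w *m b =P - alpha j) => [|/eqP n2]; first by right.
  by exfalso; apply: (hcore n1 n2 H).
have diamond : ind (0 < P) - ind (P < 0) = ind (0 < Q) - ind (Q < 0) -> P != 0 -> Q != 0 ->
   [/\ inW0J alpha Lam (sref j *m u), inW0J alpha Lam (sref j *m w)
     & qbg_edge Phi alpha Lam (sref j *m w) b (sref j *m u)].
  move=> ed nP nQ.
  have gSu : good (sref j *m u) by apply: good_sref; rewrite // uL.
  have gSw : good (sref j *m w) by apply: good_sref.
  have hSu := good_ell gSu; have hSw := good_ell gSw.
  rewrite -mulmxA uL NR_sref -/Q in hSu; rewrite -mulmxA NR_sref -/P in hSw.
  split; try exact: good_W0J.
  split; first exact: good_W0J.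
  - by rewrite bp nbJ.
  - apply: esym; apply: (floor_eq (v := v)) => //.
      exact: inW0_mul (inW0_mul (inW0_sref j) hw) (refl_W0 bP).
    by rewrite eu !mulmxA.
  case: hlen => h; [left | right].
    apply/eqP; rewrite -(eqr_nat R) -natr1; apply/eqP.
    have h' : (ell u)%:R = (ell w)%:R + 1 :> R by rewrite h natr1.
    lra.
  lra.
split.
- move=> hP n1 n2.
  have hQ : 0 < Q.
    by rewrite ltNge; apply/negP => hQ; apply: (hcore n1 n2); right.
  have ed : ind (0 < P) - ind (P < 0) = ind (0 < Q) - ind (Q < 0).
    by rewrite hP hQ !ltNge !ltW.
  have [d1 d2 d3] := diamond ed (lt0r_neq0 hP) (lt0r_neq0 hQ).
  by split.
- move=> hQ n1 n2.
  have hP : P < 0.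
    by rewrite ltNge; apply/negP => hP; apply: (hcore n1 n2); left.
  have ed : ind (0 < P) - ind (P < 0) = ind (0 < Q) - ind (Q < 0).
    by rewrite hP hQ !ltNge !ltW.
  have [d1 d2 d3] := diamond ed (ltr0_neq0 hP) (ltr0_neq0 hQ).
  by split.
- by move=> hQ hP; apply: hpm; left.
- by move=> hQ hP; apply: hpm; right.
Qed.

End Roots.


Unset Implicit Arguments.

Theorem lemma4p4 (R : realFieldType) (n : nat) (Phi : seq 'cV[R]_n)
  (alpha : 'I_n -> 'cV[R]_n) (Lam : 'cV[R]_n)
  (hPhi : is_reduced_irreducible_root_system Phi)
  (hbase : is_base Phi alpha)
  (hLam : forall j : 'I_n, exists m : nat, pairing Lam (coroot (alpha j)) = m%:R)
  (w : 'M[R]_n) (b : 'cV[R]_n)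
  (hedge : qbg_edge Phi alpha Lam w b (floor alpha Lam (w *m refl b)))
  (j : 'I_n) :
  let u := floor alpha Lam (w *m refl b) in
  let aj := coroot (alpha j) in
  [/\ (0 < pairing (w *m Lam) aj -> w *m b != alpha j -> w *m b != - alpha j ->
        [/\ 0 < pairing (w *m refl b *m Lam) aj,
            inW0J alpha Lam (sref alpha j *m u),
            inW0J alpha Lam (sref alpha j *m w)
          & qbg_edge Phi alpha Lam (sref alpha j *m w) b (sref alpha j *m u)]),
      (pairing (w *m refl b *m Lam) aj < 0 -> w *m b != alpha j -> w *m b != - alpha j ->
        [/\ pairing (w *m Lam) aj < 0,
            inW0J alpha Lam (sref alpha j *m u),
            inW0J alpha Lam (sref alpha j *m w)
          & qbg_edge Phi alpha Lam (sref alpha j *m w) b (sref alpha j *m u)]),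
      (pairing (w *m refl b *m Lam) aj < 0 -> 0 <= pairing (w *m Lam) aj ->
        w *m b = alpha j \/ w *m b = - alpha j)
    & (pairing (w *m refl b *m Lam) aj <= 0 -> 0 < pairing (w *m Lam) aj ->
        w *m b = alpha j \/ w *m b = - alpha j)].
Proof. exact: (main hPhi hbase hLam hedge j). Qed.
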